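(* Let $\alpha > 0$, $\beta > 0$, $T > 0$, and $\tau > 0$ with $T/\tau \in \mathbb{N}$. For $u \in \mathrm{H}^1(0,T)$ let $v$ be its upwinded interpolant on $[0,T]$. Then there is a constant $C$, independent of $\alpha$ and $\tau$, such that $$\int_0^T | u - v|^2 \leq C \tau^2 \int_0^T |\dot u|^2,$$ where $\dot u$ denotes the derivative of $u$.
   Context: Given $\alpha, \beta > 0$ and the mesh of nodes $k\tau$, the upwinded interpolant of a continuous function $u$ is the unique continuous function $v$ with $v(k\tau) = u(k\tau)$ at every node and which, on each mesh interval $[k\tau, (k+1)\tau]$, is of the form $v(t) = c_1 + c_2 \exp(-\beta t/\alpha)$ for constants $c_1, c_2$ (depending on the interval). *)

(* Defs.v *)
From HB Require Import structures.
From mathcomp Require Import all_boot all_order all_algebra.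
From mathcomp Require Import all_classical all_reals all_analysis.
Set Implicit Arguments. Unset Strict Implicit. Unset Printing Implicit Defensive.
Import Order.TTheory GRing.Theory Num.Theory.
Import numFieldNormedType.Exports.
Local Open Scope classical_set_scope.
Local Open Scope ring_scope.

(* [H1_deriv T u g] : u belongs to H^1(0,T) with weak derivative g, i.e.
   g is measurable, integrable and square integrable on [0,T], and
   u t = u 0 + \int_0^t g  for all t in [0,T]. *)
Definition H1_deriv (R : realType) (T : R) (u g : R -> R) : Prop :=
  [/\ measurable_fun `[0%R, T] g,
      (@lebesgue_measure R).-integrable `[0%R, T] (EFin \o g),
      (\int[@lebesgue_measure R]_(x in `[0%R, T]) ((g x) ^+ 2)%:E < +oo)%E
    & forall t, 0 <= t <= T ->
        u t = u 0 + fine (\int[@lebesgue_measure R]_(x in `[0%R, t]) (g x)%:E)].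

Definition upwind_interpolant (R : realType) (alpha beta tau : R) (N : nat)
    (u v : R -> R) : Prop :=
  [/\ {within `[0, N%:R * tau], continuous v},
      (forall k : nat, (k <= N)%N -> v (k%:R * tau) = u (k%:R * tau))
    & (forall k : nat, (k < N)%N -> exists c1 c2 : R,
        forall t, k%:R * tau <= t <= k.+1%:R * tau ->
          v t = c1 + c2 * expR (- (beta * t / alpha)))].

(* Main.v *)
Require Import Defs.
From HB Require Import structures.
From mathcomp Require Import all_boot all_order all_algebra.
From mathcomp Require Import all_classical all_reals all_analysis.
From mathcomp Require Import measurable_realfun ring lra.
Import Order.TTheory GRing.Theory Num.Theory.
Import numFieldNormedType.Exports.
Local Open Scope classical_set_scope.
Local Open Scope ring_scope.

Lemma integrable_cst_itv {R : realType} (a b k : R) :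
  (@lebesgue_measure R).-integrable `[a, b] (EFin \o cst k).
Proof.
apply/integrableP; split; first exact/measurable_EFinP.
rewrite (eq_integral (cst `|k|%:E)%E) ?integral_cst //=.
rewrite lebesgue_measure_itv /=.
case: ifPn => _; last by rewrite mule0 ltry.
by rewrite -EFinB -EFinM ltry.
Qed.

Lemma cs_ineq {R : realType} {g : R -> R} {a b : R} : a < b ->
  (@lebesgue_measure R).-integrable `[a,b] (EFin \o g) ->
  (@lebesgue_measure R).-integrable `[a,b] (EFin \o (fun x => g x ^+ 2)) ->
  (\int[@lebesgue_measure R]_(x in `[a,b]) `|g x|) ^+ 2
   <= (b - a) * \int[@lebesgue_measure R]_(x in `[a,b]) (g x ^+ 2).
Proof.
move=> ab ig ig2.
have ig1 := integrable_norm ig.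
set A := \int[@lebesgue_measure R]_(x in `[a,b]) `|g x|.
set B := \int[@lebesgue_measure R]_(x in `[a,b]) (g x ^+ 2).
have key c : 2 * c * A <= B + c ^+ 2 * (b - a).
  have : \int[@lebesgue_measure R]_(x in `[a,b]) (2 * c * `|g x|)
       <= \int[@lebesgue_measure R]_(x in `[a,b]) (g x ^+ 2 + c ^+ 2).
    apply: le_Rintegral => //.
    - apply: (eq_integrable _ _ _ _ (integrableZl _ (2 * c) ig1)) => //.
      apply: (eq_integrable _ _ _ _ (integrableD _ ig2 (integrable_cst_itv (R:=R) a b (c ^+ 2)))) => //.
    - move=> x _; rewrite -[g x ^+ 2]real_normK ?num_real //.
      have := sqr_ge0 (`|g x| - c); lra.
  rewrite RintegralZl // RintegralD //; last exact: integrable_cst_itv.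
  rewrite Rintegral_cst //.
  have -> : fine ((@lebesgue_measure R) `[a,b]%classic) = b - a.
    by rewrite lebesgue_measure_itv /= lte_fin ab -EFinB.
  by [].
have L0 : 0 < b - a by lra.
have := key (A / (b - a)).
move=> h.
have e : 2 * (A / (b - a)) * A = 2 * A ^+ 2 / (b - a) by field; lra.
have e2 : (A / (b - a)) ^+ 2 * (b - a) = A ^+ 2 / (b - a) by field; lra.
rewrite e e2 in h.
have : A ^+ 2 / (b - a) <= B by lra.
by rewrite ler_pdivrMr // mulrC.
Qed.

Lemma H1_int2 {R : realType} {T : R} {u g : R -> R} : H1_deriv T u g ->
  (@lebesgue_measure R).-integrable `[0, T] (EFin \o (fun x => g x ^+ 2)).
Proof.
case=> mg ig ig2 _; apply/integrableP; split.
  by apply/measurable_EFinP; exact: measurable_funX.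
have -> : (fun x => `|(EFin \o (fun x0 : R => (g x0 ^+ 2)%R)) x|%E) = (fun x => (g x ^+ 2)%:E).
  by apply/funext => x; rewrite /= ger0_norm // sqr_ge0.
by [].
Qed.

Lemma Rint_sub {R : realType} (i j : interval R) (f : R -> R) :
  [set` i] `<=` [set` j] ->
  (@lebesgue_measure R).-integrable [set` j] (EFin \o f) ->
  (forall x, [set` j] x -> 0 <= f x) ->
  \int[@lebesgue_measure R]_(x in [set` i]) f x <= \int[@lebesgue_measure R]_(x in [set` j]) f x.
Proof.
move=> AB iB f0.
have iA : (@lebesgue_measure R).-integrable [set` i] (EFin \o f).
  by apply: integrableS iB.
rewrite /Rintegral; apply: fine_le.
- by apply: integrable_fin_num.
- by apply: integrable_fin_num.
apply: ge0_subset_integral => //.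
  by case/integrableP: iB.
Qed.

Lemma diff_bound {R : realType} {T : R} {u g : R -> R} {a x b : R} :
  H1_deriv T u g -> 0 <= a -> a <= x -> x <= b -> b <= T ->
  `|u x - u a| <= \int[@lebesgue_measure R]_(t in `[a, b]) `|g t|.
Proof.
move=> H a0 ax xb bT.
have [mg ig ig2 hu] := H.
rewrite (hu x); last by apply/andP; split; lra.
rewrite (hu a); last by apply/andP; split; lra.
rewrite opprD addrACA subrr add0r.
have ix : (@lebesgue_measure R).-integrable `[0, x] (EFin \o g).
  apply: integrableS ig => //; apply: subset_itvl; rewrite bnd_simp; lra.
change (`|\int[@lebesgue_measure R]_(t in `[0, x]) g t
        - \int[@lebesgue_measure R]_(t in `[0, a]) g t|
        <= \int[@lebesgue_measure R]_(t in `[a, b]) `|g t|).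
rewrite Rintegral_itvB //; try by rewrite bnd_simp.
have iax : (@lebesgue_measure R).-integrable `]a, x] (EFin \o g).
  apply: integrableS ix => //; apply: subset_itvr; rewrite bnd_simp; lra.
apply: le_trans (le_normr_Rintegral _ iax) _ => //.
apply: Rint_sub => //.
- apply: subset_itv; rewrite bnd_simp; lra.
- apply: integrable_norm; apply: integrableS ig => //.
  apply: subset_itv; rewrite bnd_simp; lra.
Qed.

Lemma piece_pt {R : realType} (T : R) (u g v e : R -> R) (a b c1 c2 x : R) :
  H1_deriv T u g -> 0 <= a -> a < b -> b <= T ->
  v a = u a -> v b = u b ->
  (forall t, a <= t <= b -> v t = c1 + c2 * e t) ->
  e b <= e x -> e x <= e a -> a <= x -> x <= b ->
  (u x - v x) ^+ 2 <=
    4 * (b - a) * \int[@lebesgue_measure R]_(t in `[a, b]) (g t ^+ 2).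
Proof.
move=> H a0 ab bT va vb hv ebx exa ax xb.
have [mg ig _ _] := H.
have ig2 := H1_int2 H.
have d1 := diff_bound H a0 ax xb bT.
have d2 := diff_bound H a0 (ltW ab) (lexx b) bT.
have iga : (@lebesgue_measure R).-integrable `[a, b] (EFin \o g).
  apply: integrableS ig => //; apply: subset_itv; rewrite bnd_simp; lra.
have iga2 : (@lebesgue_measure R).-integrable `[a, b] (EFin \o (fun t => g t ^+ 2)).
  apply: integrableS ig2 => //; apply: subset_itv; rewrite bnd_simp; lra.
have cs := cs_ineq ab iga iga2.
set A := \int[@lebesgue_measure R]_(t in `[a, b]) `|g t| in d1 d2 cs.
set B := \int[@lebesgue_measure R]_(t in `[a, b]) (g t ^+ 2) in cs *.
have A0 : 0 <= A by apply: Rintegral_ge0 => t _.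
have hx := hv x (introT andP (conj ax xb)).
have ha := hv a (introT andP (conj (lexx a) (ltW ab))).
have hb := hv b (introT andP (conj (ltW ab) (lexx b))).
have E1 : u x - v x = (u x - u a) + c2 * (e a - e x).
  by rewrite hx -va ha; ring.
have E2 : u b - u a = - (c2 * (e a - e b)).
  by rewrite -va -vb ha hb; ring.
have E3 : `|c2 * (e a - e x)| <= `|u b - u a|.
  rewrite E2 normrN !normrM ler_wpM2l //.
  rewrite !ger0_norm; lra.
have key : `|u x - v x| <= 2 * A.
  rewrite E1; apply: le_trans (ler_normD _ _) _; lra.
rewrite -real_normK ?num_real //.
have n0 : 0 <= `|u x - v x| by [].
set w := `|u x - v x| in key n0 *.
nra.
Qed.

Lemma piece_int {R : realType} (T : R) (u g v e : R -> R) (a b c1 c2 : R) :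
  H1_deriv T u g -> 0 <= a -> a < b -> b <= T ->
  v a = u a -> v b = u b ->
  (forall t, a <= t <= b -> v t = c1 + c2 * e t) ->
  (forall t, a <= t <= b -> e b <= e t <= e a) ->
  measurable_fun `]a, b] (fun x => (u x - v x) ^+ 2) ->
  (\int[@lebesgue_measure R]_(x in `]a, b]) ((u x - v x) ^+ 2)%:E
    <= (4 * (b - a) ^+ 2)%:E
       * \int[@lebesgue_measure R]_(x in `]a, b]) ((g x) ^+ 2)%:E)%E.
Proof.
move=> H a0 ab bT va vb hv he mw.
have ig2 := H1_int2 H.
have iga2 : (@lebesgue_measure R).-integrable `[a, b] (EFin \o (fun t => g t ^+ 2)).
  apply: integrableS ig2 => //; apply: subset_itv; rewrite bnd_simp; lra.
set B := \int[@lebesgue_measure R]_(t in `[a, b]) (g t ^+ 2).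
have -> : (\int[@lebesgue_measure R]_(x in `]a, b]) ((g x) ^+ 2)%:E)%E = B%:E.
  rewrite integral_itv_obnd_cbnd; last first.
    apply: measurable_funS (measurable_int _ iga2) => //.
    apply: subset_itv; rewrite bnd_simp; lra.
  rewrite /B /Rintegral fineK //; exact: integrable_fin_num.
apply: (@le_trans _ _ (\int[@lebesgue_measure R]_(x in `]a, b]) (4 * (b - a) * B)%:E)%E).
  apply: ge0_le_integral => //.
  - by move=> x _; rewrite lee_fin sqr_ge0.
  - exact/measurable_EFinP.
  - move=> x; rewrite /= in_itv /= => /andP[ax xb].
    have := he x; rewrite (ltW ax) xb => /(_ isT) /andP[h1 h2].
    rewrite lee_fin.
    exact: (@piece_pt R T u g v e a b c1 c2 x H a0 ab bT va vb hv h1 h2 (ltW ax) xb).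
rewrite integral_cst //.
have hm := @lebesgue_measure_itv R `]a, b].
rewrite /= lte_fin ab -EFinB in hm.
apply: (@le_trans _ _ ((4 * (b - a) * B)%:E * (b - a)%:E)%E).
  by rewrite -hm; exact: lexx.
by rewrite -!EFinM lee_fin le_eqVlt; apply/orP; left; apply/eqP; ring.
Qed.

Theorem proposition9 (R : realType) (beta T : R) :
  0 < beta -> 0 < T ->
  exists C : R,
    forall (alpha tau : R) (N : nat) (u g v : R -> R),
      0 < alpha -> 0 < tau -> T = N%:R * tau ->
      H1_deriv T u g ->
      upwind_interpolant alpha beta tau N u v ->
      (\int[@lebesgue_measure R]_(x in `[0%R, T]) ((u x - v x) ^+ 2)%:E
        <= (C * tau ^+ 2)%:E
           * \int[@lebesgue_measure R]_(x in `[0%R, T]) ((g x) ^+ 2)%:E)%E.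
Proof.
move=> hb hT; exists 4 => alpha tau N u g v ha ht hTN H [cv hnode hpiece].
have [mg ig ig2 hu] := H.
have mv : measurable_fun `[0, T] v.
  apply: subspace_continuous_measurable_fun => //.
  by rewrite hTN.
have mu' : measurable_fun `[0, T]
    (fun x => u 0 + parameterized_integral (@lebesgue_measure R) 0 x g).
  apply: measurable_funD => //.
  apply: subspace_continuous_measurable_fun => //.
  exact: parameterized_integral_continuous (ltW hT) ig.
have mu : measurable_fun `[0, T] u.
  apply: eq_measurable_fun mu' => x /set_mem; rewrite /= in_itv /= => hx.
  by rewrite [RHS]hu.
have mw : measurable_fun `[0, T] (fun x => (u x - v x) ^+ 2).
  by apply: measurable_funX; apply: measurable_funB.
have IH : forall m, (m <= N)%N ->
    (\int[@lebesgue_measure R]_(x in `[0%R, (m%:R * tau)%R]) ((u x - v x) ^+ 2)%:E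
      <= (4 * tau ^+ 2)%:E
        * \int[@lebesgue_measure R]_(x in `[0%R, (m%:R * tau)%R]) ((g x) ^+ 2)%:E)%E.
  elim=> [_|m IHm hm].
    by rewrite mul0r set_itv1 !integral_set1 mule0.
  set a := m%:R * tau; set b := m.+1%:R * tau.
  have a0 : 0 <= a by apply: mulr_ge0 => //; exact: ltW.
  have eb : b = a + tau by rewrite /b /a -addn1 natrD mulrDl mul1r.
  have ab : a < b by lra.
  have bT : b <= T by rewrite hTN /b; apply: ler_wpM2r; [exact: ltW | rewrite ler_nat].
  have [c1 [c2 hv]] := hpiece m hm.
  have va := hnode m (ltnW hm).
  have vb := hnode m.+1 hm.
  have hsplit : `[0, b]%classic = `[0, a] `|` `]a, b] :> set R.
    by apply: itv_bndbnd_setU; rewrite bnd_simp //; exact: ltW.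
  have sb : (`[0, b] `<=` `[0, T])%classic.
    by apply: subset_itv; rewrite bnd_simp.
  have mwb : measurable_fun `[0, b] (EFin \o (fun x => (u x - v x) ^+ 2)).
    by apply/measurable_EFinP; apply: measurable_funS mw.
  have mgb : measurable_fun `[0, b] (EFin \o (fun x => (g x) ^+ 2)).
    by apply/measurable_EFinP; apply: measurable_funS (measurable_funX 2 mg).
  have dis : [disjoint `[0, a]%classic & `]a, b]%classic].
    rewrite disj_set2E; apply/eqP; rewrite -subset0 => x [] /=.
    by rewrite !in_itv /= => /andP[_ h1] /andP[h2 _]; lra.
  rewrite hsplit in mwb mgb *.
  rewrite ge0_integral_setU //; last by move=> x _; rewrite lee_fin sqr_ge0.
  rewrite ge0_integral_setU //; last by move=> x _; rewrite lee_fin sqr_ge0.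
  rewrite muleDr //; last by rewrite ge0_adde_def // inE; apply: integral_ge0 => x _; rewrite lee_fin sqr_ge0.
  apply: leeD; first exact: IHm (ltnW hm).
  have -> : (4 * tau ^+ 2) = (4 * (b - a) ^+ 2) by rewrite eb addrAC subrr add0r.
  apply: (@piece_int R T u g v (fun t => expR (- (beta * t / alpha))) a b c1 c2 H a0 ab bT va vb hv).
  - move=> t /andP[h1 h2]; rewrite !ler_expR !lerN2.
    by apply/andP; split; rewrite ler_pM2r ?invr_gt0 // ler_pM2l.
  - apply: measurable_funS mw => //.
    by apply: subset_itv; rewrite bnd_simp //; exact: ltW.
rewrite hTN; exact: IH.
Qed.
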